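(* Let $S$ be a finite $p$-group, $\mathcal{A}$ a divisible $S$-algebra, and $\varphi:P\to Q$, $\psi:Q\to R$ isomorphisms of $\mathfrak{F}_S(\mathcal{A})$. If $u_\varphi\in\mathcal{A}(\varphi)$ is a twisted unit of $\varphi$ and $u_\psi\in\mathcal{A}(\psi)$ is a twisted unit of $\psi$, then $u_\psi u_\varphi\in\mathcal{A}(\psi\varphi)$ is a twisted unit of $\psi\varphi$.
   Context: $\mathcal{O}$ is a complete local noetherian domain with maximal ideal $\mathfrak{m}$ and algebraically closed residue field of characteristic $p$. An interior $S$-algebra is an $\mathcal{O}$-free finite-rank $\mathcal{O}$-algebra $\mathcal{A}$ with group homomorphism $S\to\mathcal{A}^\times$; it is bifree if it has an $\mathcal{O}$-basis $Y$ with $sY=Y=Ys$ ($s\in S$) on which left and right actions are free. For $P\le S$ and injective $\varphi:P\to S$, $\mathcal{A}(\varphi)$ is the Brauer quotient $\mathcal{A}^\Delta/(\mathfrak{m}\mathcal{A}^\Delta+\sum_{V<\Delta}\mathrm{tr}_V^\Delta\mathcal{A}^V)$ for $\Delta=\Delta(\varphi,P)=\{(\varphi(p),p)\}\le S\times S$ acting by $(s,t)a=sat^{-1}$, with quotient map $\mathrm{br}_\varphi$; $\mathcal{A}(P)=\mathcal{A}(\iota_P)$. Multiplication induces $\mathcal{A}(\psi)\times\mathcal{A}(\varphi)\to\mathcal{A}(\psi\varphi)$, $\mathrm{br}_\psi(a)\mathrm{br}_\varphi(c)=\mathrm{br}_{\psi\varphi}(ac)$. $\mathfrak{F}_S(\mathcal{A})$: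 objects subgroups of $S$, $\mathrm{Hom}(P,Q)=\{\varphi:P\to Q$ injective$:\mathcal{A}(\varphi)\ne0\}$; $\mathcal{A}$ is divisible if it is bifree and $\mathfrak{F}_S(\mathcal{A})$ contains all inclusions, is closed under composition, and each morphism is an inclusion composed with an isomorphism of $\mathfrak{F}_S(\mathcal{A})$. For an isomorphism $\varphi:P\to Q$ of $\mathfrak{F}_S(\mathcal{A})$, a twisted unit of $\varphi$ is $u\in\mathcal{A}(\varphi)$ such that there is $u^\dagger\in\mathcal{A}(\varphi^{-1})$ with $u^\dagger u=1_{\mathcal{A}(P)}$. *)

(* Defs.v *)
From HB Require Import structures.
From mathcomp Require Import all_boot all_order all_algebra all_fingroup all_solvable.
Set Implicit Arguments. Unset Strict Implicit. Unset Printing Implicit Defensive.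
Import GRing.Theory.
Local Open Scope ring_scope.

Section CoeffRing.
Variable O : idomainType.

Definition is_ideal (I : O -> Prop) : Prop :=
  I 0 /\ (forall x y, I x -> I y -> I (x + y)) /\ (forall r x, I x -> I (r * x)).

Definition noetherian : Prop :=
  forall I : O -> Prop, is_ideal I ->
    exists n (g : 'I_n -> O),
      forall x, I x <-> exists c : 'I_n -> O, x = \sum_(i < n) c i * g i.

Variable m : {pred O}.

Definition local_with_max : Prop :=
  is_ideal (fun x => x \in m) /\ forall x, (x \in m) = (x \isn't a GRing.unit).

Fixpoint mpow (n : nat) : O -> Prop :=
  match n with
  | 0%N => fun _ => True
  | n'.+1 => fun x => exists k (a b : 'I_k -> O),
      (forall i, a i \in m) /\ (forall i, mpow n' (b i)) /\
      x = \sum_(i < k) a i * b i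
  end.

(* O is m-adically complete (and separated). *)
Definition madic_complete : Prop :=
  (forall y, (forall n, mpow n y) -> y = 0) /\
  (forall x : nat -> O, (forall n, mpow n (x n.+1 - x n)) ->
     exists l, forall n, mpow n (l - x n)).

Definition residue_char (p : nat) : Prop := prime p /\ (p%:R : O) \in m.

(* residue field O/m is algebraically closed: every polynomial whose
   reduction mod m is non-constant has a root mod m.  (Every non-constant
   polynomial over O/m lifts to such an f with unit leading coefficient.) *)
Definition residue_alg_closed : Prop :=
  forall f : {poly O}, (1 < size f)%N -> lead_coef f \notin m ->
    exists x : O, f.[x] \in m.

End CoeffRing.

Section Brauer.
Variables (gT : finGroupType) (S : {group gT}).
Variables (O : idomainType) (m : {pred O}) (A : algType O).
Variable sigma : gT -> A.

Definition interior : Prop :=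
  sigma 1%g = 1 /\ {in S &, forall x y, sigma (x * y)%g = sigma x * sigma y}.

Definition is_Obasis (Y : seq A) : Prop :=
  (forall a : A, exists c : 'I_(size Y) -> O, a = \sum_(i < size Y) c i *: Y`_i) /\
  (forall c : 'I_(size Y) -> O,
     \sum_(i < size Y) c i *: Y`_i = 0 -> forall i, c i = 0).

Definition Ofree_finite : Prop := exists Y : seq A, is_Obasis Y.

Definition bifree : Prop :=
  exists Y : seq A, [/\ is_Obasis Y /\ uniq Y,
    (forall s, s \in S -> perm_eq [seq sigma s * y | y <- Y] Y),
    (forall s, s \in S -> perm_eq [seq y * sigma s | y <- Y] Y),
    (forall s y, s \in S -> y \in Y -> sigma s * y = y -> s = 1%g) &
    (forall s y, s \in S -> y \in Y -> y * sigma s = y -> s = 1%g)].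

Definition act (st : gT * gT) (a : A) : A := sigma st.1 * a * sigma (st.2^-1)%g.

Definition fixed (V : {set gT * gT}) (a : A) : Prop :=
  forall st, st \in V -> act st a = a.

Definition trace (V D : {set gT * gT}) (a : A) : A :=
  \sum_(C in lcosets V D) act (repr C) a.

(* the kernel  m A^D + sum_{V < D} tr_V^D A^V  of the Brauer quotient
   (we only ever apply it to elements of A^D) *)
Definition brker (D : {set gT * gT}) (a : A) : Prop :=
  exists n (ms : 'I_n -> O) (bs : 'I_n -> A) (c : {group gT * gT} -> A),
    [/\ forall i, ms i \in m,
        forall i, fixed D (bs i),
        forall V : {group gT * gT}, V \proper D -> fixed V (c V) &
        a = \sum_(i < n) ms i *: bs i
            + \sum_(V : {group gT * gT} | V \proper D) trace V D (c V)].

Definition Delta (phi : gT -> gT) (P : {set gT}) : {set gT * gT} :=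
  [set (phi x, x) | x in P].

(* A(phi) <> 0 : the Brauer quotient A^D / brker D is nonzero *)
Definition brauer_nonzero (phi : gT -> gT) (P : {set gT}) : Prop :=
  exists a, fixed (Delta phi P) a /\ ~ brker (Delta phi P) a.

Definition inj_hom (P : {set gT}) (phi : gT -> gT) : Prop :=
  {in P &, injective phi} /\ {in P &, {morph phi : x y / (x * y)%g}}.

Definition Fhom (P Q : {group gT}) (phi : gT -> gT) : Prop :=
  [/\ P \subset S, Q \subset S, inj_hom P phi, phi @: P \subset Q &
      brauer_nonzero phi P].

Definition Fiso (P Q : {group gT}) (phi : gT -> gT) : Prop :=
  [/\ Fhom P Q phi, phi @: P = Q &
      exists phinv, {in P, cancel phi phinv} /\ Fhom Q P phinv].

Definition divisible : Prop :=
  [/\ bifree,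
      (forall P Q : {group gT}, P \subset Q -> Q \subset S -> Fhom P Q id),
      (forall (P Q R : {group gT}) phi psi,
          Fhom P Q phi -> Fhom Q R psi -> Fhom P R (psi \o phi)) &
      (forall (P Q : {group gT}) phi, Fhom P Q phi ->
          exists P' : {group gT}, P' = phi @: P :> {set gT} /\ Fiso P P' phi)].

(* a (representative of a) twisted unit of the isomorphism phi : P -> Q:
   a in A^Delta(phi,P) and there is b in A^Delta(phi^-1,Q) with
   br(b) br(a) = 1 in A(P), i.e. b*a - 1 lies in the Brauer kernel for
   Delta(iota_P, P). *)
Definition twisted_unit (P Q : {group gT}) (phi : gT -> gT) (a : A) : Prop :=
  fixed (Delta phi P) a /\
  exists phinv, [/\ {in P, cancel phi phinv}, {in Q, cancel phinv phi} &
    exists b, fixed (Delta phinv Q) b /\ brker (Delta id P) (b * a - 1)].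

End Brauer.

(* Main.v *)
Require Import Defs.
From HB Require Import structures.
From mathcomp Require Import all_boot all_order all_algebra all_fingroup all_solvable.
Set Implicit Arguments. Unset Strict Implicit. Unset Printing Implicit Defensive.
Import GRing.Theory.
Local Open Scope ring_scope.

Notation actA := Defs.act.

Lemma sigma_inv (gT : finGroupType) (S : {group gT}) (O : idomainType) (A : algType O)
  (sigma : gT -> A) (hint : interior S sigma) x :
  x \in S -> sigma (x^-1)%g * sigma x = 1 /\ sigma x * sigma (x^-1)%g = 1.
Proof.
case: hint => h1 hM xS.
by rewrite -!hM ?groupV // mulVg mulgV h1.
Qed.

Lemma act_mul (gT : finGroupType) (S : {group gT}) (O : idomainType) (A : algType O)
  (sigma : gT -> A) (hint : interior S sigma) (d1 d2 : gT * gT) a :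
  d1 \in setX S S -> d2 \in setX S S ->
  actA sigma (d1 * d2)%g a = actA sigma d1 (actA sigma d2 a).
Proof.
case: d1 d2 => [s1 t1] [s2 t2]; rewrite !inE /= => /andP[s1S t1S] /andP[s2S t2S].
case: hint => h1 hM.
rewrite /Defs.act /= invMg !hM ?groupV // !mulrA //.
Qed.

Lemma act_add (gT : finGroupType) (O : idomainType) (A : algType O)
  (sigma : gT -> A) d a b :
  actA sigma d (a + b) = actA sigma d a + actA sigma d b.
Proof. by rewrite /Defs.act mulrDr mulrDl. Qed.

Lemma act0 (gT : finGroupType) (O : idomainType) (A : algType O)
  (sigma : gT -> A) d : actA sigma d 0 = 0.
Proof. by rewrite /Defs.act mulr0 mul0r. Qed.

Lemma trace_add (gT : finGroupType) (O : idomainType) (A : algType O)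
  (sigma : gT -> A) V D a b :
  trace sigma V D (a + b) = trace sigma V D a + trace sigma V D b.
Proof. by rewrite /trace -big_split /=; apply: eq_bigr => C _; rewrite act_add. Qed.

Lemma trace0 (gT : finGroupType) (O : idomainType) (A : algType O)
  (sigma : gT -> A) V D : trace sigma V D 0 = 0.
Proof. by rewrite /trace big1 // => C _; rewrite act0. Qed.

Lemma split_lshift m n (i : 'I_m) : split (lshift n i) = inl i.
Proof. exact: (unsplitK (inl i)). Qed.
Lemma split_rshift m n (i : 'I_n) : split (rshift m i) = inr i.
Proof. exact: (unsplitK (inr i)). Qed.

Lemma brker_add (gT : finGroupType) (O : idomainType) (m : {pred O}) (A : algType O)
  (sigma : gT -> A) D a b :
  brker m sigma D a -> brker m sigma D b -> brker m sigma D (a + b).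
Proof.
move=> [n1 [ms1 [bs1 [c1 [hm1 hb1 hc1 ->]]]]] [n2 [ms2 [bs2 [c2 [hm2 hb2 hc2 ->]]]]].
exists (n1 + n2)%N.
exists (fun i => match split i with inl j => ms1 j | inr j => ms2 j end).
exists (fun i => match split i with inl j => bs1 j | inr j => bs2 j end).
exists (fun V => c1 V + c2 V); split.
- by move=> i; case: (split i).
- by move=> i; case: (split i).
- move=> V VD st stV; rewrite act_add (hc1 _ VD _ stV) (hc2 _ VD _ stV) //.
rewrite big_split_ord /=.
have -> : \sum_(i < n1) (match split (lshift n2 i) with inl j => ms1 j | inr j => ms2 j end *:
    match split (lshift n2 i) with inl j => bs1 j | inr j => bs2 j end) = \sum_(i < n1) ms1 i *: bs1 i.
  by apply: eq_bigr => i _; rewrite split_lshift.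
have -> : \sum_(i < n2) (match split (rshift n1 i) with inl j => ms1 j | inr j => ms2 j end *:
    match split (rshift n1 i) with inl j => bs1 j | inr j => bs2 j end) = \sum_(i < n2) ms2 i *: bs2 i.
  by apply: eq_bigr => i _; rewrite split_rshift.
have -> : \sum_(V : {group gT * gT} | V \proper D) trace sigma V D (c1 V + c2 V) =
   \sum_(V : {group gT * gT} | V \proper D) trace sigma V D (c1 V) + \sum_(V : {group gT * gT} | V \proper D) trace sigma V D (c2 V).
  by rewrite -big_split; apply: eq_bigr => V _; rewrite trace_add.
set x1 := \sum_(i < n1) _. set x2 := \sum_(i < n2) _.
set y1 := \sum_(V : {group gT * gT} | _) trace sigma V D (c1 V). set y2 := \sum_(V : {group gT * gT} | _) trace sigma V D (c2 V).
by rewrite -!addrA; congr (_ + _); rewrite addrCA.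
Qed.

Lemma brker0 (gT : finGroupType) (O : idomainType) (m : {pred O}) (A : algType O)
  (sigma : gT -> A) D : brker m sigma D 0.
Proof.
exists 0%N, (fun _ => 0), (fun _ => 0), (fun _ => 0); split => //.
- by case.
- by case.
- by move=> V _ st _; rewrite act0.
by rewrite big_ord0 add0r big1 // => V _; rewrite trace0.
Qed.

Lemma brker_scal (gT : finGroupType) (O : idomainType) (m : {pred O}) (A : algType O)
  (sigma : gT -> A) D r b :
  r \in m -> fixed sigma D b -> brker m sigma D (r *: b).
Proof.
move=> rm fb.
exists 1%N, (fun _ => r), (fun _ => b), (fun _ => 0); split => //.
- by move=> V _ st _; rewrite act0.
by rewrite big_ord1 big1 ?addr0 // => V _; rewrite trace0.
Qed.

Lemma brker_trace (gT : finGroupType) (O : idomainType) (m : {pred O}) (A : algType O)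
  (sigma : gT -> A) (D W : {group gT * gT}) e :
  W \proper D -> fixed sigma W e -> brker m sigma D (trace sigma W D e).
Proof.
move=> WD fe.
exists 0%N, (fun _ => 0), (fun _ => 0), (fun V => if V == W then e else 0); split => //.
- by case.
- by case.
- move=> V _ st stV; case: eqP => [EV|_]; last by rewrite act0.
  by subst V; apply: fe.
rewrite big_ord0 add0r (bigD1 W) //= eqxx big1 ?addr0 // => V /andP[_ /negbTE ->].
exact: trace0.
Qed.

Lemma act_repr (gT : finGroupType) (S : {group gT}) (O : idomainType) (A : algType O)
  (sigma : gT -> A) (hint : interior S sigma) (D V : {group gT * gT}) x a :
  D \subset setX S S -> V \subset D -> x \in D -> fixed sigma V a ->
  actA sigma (repr (lcoset V x)) a = actA sigma x a.
Proof.
move=> hD VD xD fa.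
have : repr (lcoset V x) \in lcoset V x.
  by apply: (@mem_repr _ _ (x * 1)%g); apply: imset_f.
case/imsetP => v vV ->.
have vD : v \in D by apply: (subsetP VD).
rewrite (act_mul hint) ?(subsetP hD) //; by rewrite fa.
Qed.

Lemma imset_sub_inj (T1 T2 : finType) (k : T1 -> T2) (D C1 C2 : {set T1}) :
  {in D &, injective k} -> C1 \subset D -> C2 \subset D ->
  k @: C1 \subset k @: C2 -> C1 \subset C2.
Proof.
move=> kinj s1 s2 sk; apply/subsetP => z z1.
have /imsetP[w w2 ekw] : k z \in k @: C2 by apply: (subsetP sk); apply: imset_f.
by rewrite (kinj z w) // ?(subsetP s1 z z1) ?(subsetP s2 w w2).
Qed.

Lemma brker_transport (gT : finGroupType) (S : {group gT}) (O : idomainType)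
  (m : {pred O}) (A : algType O)
  (sigma : gT -> A) (hint : interior S sigma) (D D' : {group gT * gT})
  (k : gT * gT -> gT * gT) (f : A -> A)
  (hD : D \subset setX S S) (hD' : D' \subset setX S S)
  (kinj : {in D &, injective k}) (kmul : {in D &, {morph k : x y / (x * y)%g}})
  (kD : k @: D = D')
  (fD : forall a b, f (a + b) = f a + f b) (fZ : forall r a, f (r *: a) = r *: f a)
  (fact : forall d a, d \in D -> f (actA sigma d a) = actA sigma (k d) (f a)) a :
  brker m sigma D a -> brker m sigma D' (f a).
Proof.
have f0 : f 0 = 0 by have := fZ 0 0; rewrite !scale0r.
have fsum := big_morph f fD f0.
have fixT : forall b, fixed sigma D b -> fixed sigma D' (f b).
  move=> b fb st; rewrite -kD => /imsetP[d dD ->].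
  by rewrite -fact // fb.
have k1 : k 1%g = 1%g.
  have := kmul 1%g 1%g (group1 D) (group1 D); rewrite mulg1 => h.
  by apply: (mulgI (k 1%g)); rewrite mulg1 -h.
have trT : forall (V : {group gT * gT}) c, V \proper D -> fixed sigma V c ->
    brker m sigma D' (f (trace sigma V D c)).
  move=> V c VpD fc.
  have VD : V \subset D := proper_sub VpD.
  have gW : group_set (k @: V).
    apply/group_setP; split.
      by rewrite -k1; apply: imset_f.
    move=> y1 y2 /imsetP[v1 v1V ->] /imsetP[v2 v2V ->].
    rewrite -kmul ?(subsetP VD) //; apply: imset_f; exact: groupM.
  pose W := Group gW.
  have WD' : W \subset D' by rewrite -kD; apply: imsetS.
  have WpD' : W \proper D'.
    rewrite properE WD' /=; apply/negP => D'W.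
    move: VpD; rewrite properE VD /= => /negP; apply.
    apply: (imset_sub_inj kinj) => //; by rewrite kD.
  have fW : fixed sigma W (f c).
    move=> st /imsetP[v vV ->]; by rewrite -fact ?(subsetP VD) // fc.
  suff -> : f (trace sigma V D c) = trace sigma W D' (f c) by apply: brker_trace.
  have key : forall x, x \in D -> k @: lcoset V x = lcoset W (k x).
    move=> x xD; rewrite /lcoset -!imset_comp; apply: eq_in_imset => v vV /=.
    by rewrite kmul // (subsetP VD).
  have Lc : lcosets W D' = (fun C : {set gT * gT} => k @: C) @: lcosets V D.
    rewrite /lcosets -kD -!imset_comp; apply: eq_in_imset => x xD /=.
    by rewrite key.
  rewrite /trace Lc [RHS]big_imset /=; last first.
    move=> C1 C2; rewrite /lcosets => /imsetP[x1 x1D ->] /imsetP[x2 x2D ->] E.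
    have s1 : lcoset V x1 \subset D.
      by apply/subsetP => z /imsetP[v vV ->]; rewrite groupM // (subsetP VD).
    have s2 : lcoset V x2 \subset D.
      by apply/subsetP => z /imsetP[v vV ->]; rewrite groupM // (subsetP VD).
    apply/eqP; rewrite eqEsubset; apply/andP; split;
      apply: (imset_sub_inj kinj) => //; by rewrite E.
  rewrite fsum; apply: eq_bigr => C; rewrite /lcosets => /imsetP[x xD ->].
  rewrite key // (act_repr hint hD' WD' _ fW); last by rewrite -kD imset_f.
  by rewrite (act_repr hint hD VD) // fact.
case=> n [ms [bs [c [hm hb hc ->]]]].
rewrite fD !fsum; apply: brker_add.
  apply: (big_ind (brker m sigma D')); [exact: brker0 | exact: brker_add|].
  by move=> i _; rewrite fZ; apply: brker_scal => //; apply: fixT.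
apply: (big_ind (brker m sigma D')); [exact: brker0 | exact: brker_add|].
by move=> V VpD; apply: trT => //; apply: hc.
Qed.

Lemma fix_comm (gT : finGroupType) (S : {group gT}) (O : idomainType) (A : algType O)
  (sigma : gT -> A) (hint : interior S sigma) s t a :
  s \in S -> t \in S -> sigma s * a * sigma (t^-1)%g = a ->
  sigma s * a = a * sigma t /\ a * sigma (t^-1)%g = sigma (s^-1)%g * a.
Proof.
move=> sS tS E; split.
  by rewrite -{2}E -mulrA (sigma_inv hint tS).1 mulr1.
by rewrite -{2}E !mulrA (sigma_inv hint sS).1 mul1r.
Qed.

Lemma fixedD (gT : finGroupType) (O : idomainType) (A : algType O)
  (sigma : gT -> A) (phi : gT -> gT) (P : {set gT}) a x :
  fixed sigma (Delta phi P) a -> x \in P ->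
  sigma (phi x) * a * sigma (x^-1)%g = a.
Proof. by move=> fa xP; apply: (fa (phi x, x)); apply/imsetP; exists x. Qed.

Lemma twist_mul (gT : finGroupType) (S : {group gT}) (O : idomainType) (A : algType O)
  (sigma : gT -> A) (hint : interior S sigma) s y x u v :
  s \in S -> y \in S -> x \in S ->
  sigma s * u * sigma (y^-1)%g = u -> sigma y * v * sigma (x^-1)%g = v ->
  sigma s * (u * v) * sigma (x^-1)%g = u * v.
Proof.
move=> sS yS xS Eu Ev.
rewrite -{2}Eu -{2}Ev !mulrA -(mulrA _ (sigma (y^-1)%g)) (sigma_inv hint yS).1 mulr1.
by [].
Qed.

Unset Implicit Arguments.
Set Strict Implicit.

Theorem lemma5p3
  (O : idomainType) (m : {pred O}) (p : nat)
  (hnoeth : noetherian O) (hloc : local_with_max m) (hcomp : madic_complete m)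
  (hchar : residue_char m p) (hclosed : residue_alg_closed m)
  (gT : finGroupType) (S : {group gT}) (hS : (p.-group S)%g)
  (A : algType O) (sigma : gT -> A)
  (hint : interior S sigma) (hfree : Ofree_finite A)
  (hdiv : divisible S m sigma)
  (P Q R : {group gT}) (phi psi : gT -> gT)
  (hphi : Fiso S m sigma P Q phi) (hpsi : Fiso S m sigma Q R psi)
  (uphi upsi : A)
  (huphi : twisted_unit m sigma P Q phi uphi)
  (hupsi : twisted_unit m sigma Q R psi upsi) :
  twisted_unit m sigma P R (psi \o phi) (upsi * uphi).
Proof.
case: hphi => [[PS QS [phiinj phimul] _ _] phiPQ _].
case: hpsi => [[_ RS _ _ _] psiQR _].
case: huphi => fuphi [phinv [phiK phinvK [bphi [fbphi kphi]]]].
case: hupsi => fupsi [psinv [psiK psinvK [bpsi [fbpsi kpsi]]]].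
have phiQ : forall x, x \in P -> phi x \in Q by move=> x xP; rewrite -phiPQ imset_f.
have psiR : forall x, x \in Q -> psi x \in R by move=> x xP; rewrite -psiQR imset_f.
have phinvP : forall y, y \in Q -> phinv y \in P.
  by move=> y; rewrite -phiPQ => /imsetP[x xP ->]; rewrite phiK.
have psinvQ : forall y, y \in R -> psinv y \in Q.
  by move=> y; rewrite -psiQR => /imsetP[x xP ->]; rewrite psiK.
have inS : forall (G : {group gT}) x, G \subset S -> x \in G -> x \in S.
  by move=> G x GS xG; apply: (subsetP GS).
split.
  move=> st /imsetP[x xP ->] /=.
  apply: (twist_mul hint (y := phi x)).
  - exact: (inS R _ RS (psiR _ (phiQ _ xP))).
  - exact: (inS Q _ QS (phiQ _ xP)).
  - exact: (inS P _ PS xP).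
  - exact: (fixedD fupsi (phiQ _ xP)).
  - exact: (fixedD fuphi xP).
exists (phinv \o psinv); split.
- by move=> x xP /=; rewrite psiK ?phiK ?phiQ.
- by move=> z zR /=; rewrite phinvK ?psinvK ?psinvQ.
exists (bphi * bpsi); split.
  move=> st /imsetP[z zR ->] /=.
  apply: (twist_mul hint (y := psinv z)).
  - exact: (inS P _ PS (phinvP _ (psinvQ _ zR))).
  - exact: (inS Q _ QS (psinvQ _ zR)).
  - exact: (inS R _ RS zR).
  - exact: (fixedD fbphi (psinvQ _ zR)).
  - exact: (fixedD fbpsi zR).
have -> : bphi * bpsi * (upsi * uphi) - 1 =
    bphi * (bpsi * upsi - 1) * uphi + (bphi * uphi - 1).
  rewrite mulrBr mulr1 mulrBl addrA subrK !mulrA //.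
apply: brker_add => //.
pose k := fun st : gT * gT => (phinv st.1, phinv st.2).
have DS : forall (G : {group gT}), G \subset S -> Delta id G \subset setX S S.
  move=> G GS; apply/subsetP => st /imsetP[x xG ->]; rewrite !inE /=.
  by rewrite (subsetP GS).
have phinvM : {in Q &, {morph phinv : x y / (x * y)%g}}.
  move=> y1 y2 y1Q y2Q.
  rewrite -{1}(phinvK y1) // -{1}(phinvK y2) // -phimul ?phinvP // phiK //.
  by rewrite groupM ?phinvP.
have gD : forall (G : {group gT}), group_set (Delta id G).
  move=> G; apply/group_setP; split.
    by apply/imsetP; exists 1%g.
  move=> d1 d2 /imsetP[y1 y1G ->] /imsetP[y2 y2G ->].
  by apply/imsetP; exists (y1 * y2)%g; rewrite ?groupM.
pose DQ := Group (gD Q). pose DP := Group (gD P).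
have DQS : DQ \subset setX S S := DS _ QS.
have DPS : DP \subset setX S S := DS _ PS.
have -> : Delta id P = DP by [].
apply: (brker_transport (D := DQ) (k := k) (f := fun a => bphi * a * uphi) hint DQS DPS); last exact: kpsi.
- move=> d1 d2 /imsetP[y1 y1Q ->] /imsetP[y2 y2Q ->] [E _].
  by rewrite -(phinvK y1) // E phinvK.
- move=> d1 d2 /imsetP[y1 y1Q ->] /imsetP[y2 y2Q ->].
  by rewrite /k /= phinvM.
- apply/eqP; rewrite eqEsubset; apply/andP; split; apply/subsetP => st.
    case/imsetP=> d /imsetP[y yQ ->] -> ; apply/imsetP; exists (phinv y) => //.
    exact: phinvP.
  case/imsetP=> x xP ->; apply/imsetP; exists (phi x, phi x).
    by apply/imsetP; exists (phi x) => //; apply: phiQ.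
  by rewrite /k /= phiK.
- by move=> a b; rewrite mulrDr mulrDl.
- by move=> r a; rewrite -scalerAr -scalerAl.
- move=> d a /imsetP[y yQ ->]; rewrite /k /Defs.act /=.
  have xP := phinvP _ yQ.
  have yS := inS Q _ QS yQ; have xS := inS P _ PS xP.
  have [E1 _] := fix_comm hint xS yS (fixedD fbphi yQ).
  have := fixedD fuphi xP; rewrite phinvK // => E2.
  have [_ E3] := fix_comm hint yS xS E2.
  by rewrite !mulrA -E1 -!mulrA E3.
Qed.
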